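(* Let $S$ be a subspace of $W_0$ of finite codimension, and let $i_0>0$ be an integer. Let $M_{i_0,S}$ be the Lie subalgebra of $W$ generated by $t^{i_0}D$, $t^{i_0+1}D$, $t^{i_0}D^2$ and $S$. Then there is an integer $K>0$ with $W_{[K,\infty)}\subset M_{i_0,S}$.
   Context: Let $\mathbb{F}$ be an algebraically closed field of characteristic zero, and let $W=\mathcal{W}(\mathbb{Z},1)^{(1)}=\mathrm{span}\{t^iD^j\mid i\in\mathbb{Z},\,j\ge1\}$. Its Lie bracket is $$[t^iDf(D),t^jDg(D)]=t^{i+j}D\big((D+j)f(D+j)g(D)-(D+i)g(D+i)f(D)\big)$$ for $f,g\in\mathbb{F}[D]$. The algebra is $\mathbb{Z}$-graded by $W_i=\{t^iDf(D)\mid f\in\mathbb{F}[D]\}$. We write $W_{[K,\infty)}=\bigoplus_{k\ge K}W_k$. *)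

(* Defs.v *)
From HB Require Import structures.
From mathcomp Require Import all_boot all_order all_algebra.
Set Implicit Arguments. Unset Strict Implicit. Unset Printing Implicit Defensive.
Import Order.TTheory GRing.Theory Num.Theory.
Local Open Scope ring_scope.

(* An element of W = span{t^i D^j | i in Z, j >= 1} is encoded by its
   homogeneous components: x : int -> {poly F}, where the component
   x i = f encodes t^i D f(D).  Genuine elements of W are the finitely
   supported such functions. *)
Section WittType.
Variable F : fieldType.

Definition Wel := int -> {poly F}.

Definition finsupp (x : Wel) : Prop :=
  exists N : nat, forall i : int, (N < `|i|)%N -> x i = 0.

Definition suppN (N : nat) (x : Wel) : Prop :=
  forall i : int, (N < `|i|)%N -> x i = 0.

Definition homog (i : int) (f : {poly F}) : Wel :=
  fun k => if k == i then f else 0.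

Definition W0 : Wel := fun _ => 0.
Definition Wadd (x y : Wel) : Wel := fun k => x k + y k.
Definition Wscale (c : F) (x : Wel) : Wel := fun k => c *: x k.

Definition pshift (j : int) (f : {poly F}) : {poly F} :=
  f \Po ('X + (j%:~R)%:P).

(* [t^i D f(D), t^j D g(D)] = t^{i+j} D ((D+j) f(D+j) g(D) - (D+i) g(D+i) f(D)) *)
Definition brc (i j : int) (f g : {poly F}) : {poly F} :=
  pshift j ('X * f) * g - pshift i ('X * g) * f.

(* the bracket of two elements both supported in [-N, N] *)
Definition Wbr (N : nat) (x y : Wel) : Wel :=
  fun k => \sum_(a < (N + N).+1)
             brc (a%:Z - N%:Z) (k - (a%:Z - N%:Z))
                 (x (a%:Z - N%:Z)) (y (k - (a%:Z - N%:Z))).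

Inductive lie_gen (X : Wel -> Prop) : Wel -> Prop :=
  | lg_in x : X x -> lie_gen X x
  | lg_0 : lie_gen X W0
  | lg_add x y : lie_gen X x -> lie_gen X y -> lie_gen X (Wadd x y)
  | lg_scale c x : lie_gen X x -> lie_gen X (Wscale c x)
  | lg_br N x y : suppN N x -> suppN N y ->
      lie_gen X x -> lie_gen X y -> lie_gen X (Wbr N x y).

(* M_{i0,S}: generated by t^{i0}D, t^{i0+1}D, t^{i0}D^2 and S (S viewed
   inside W_0 via f |-> t^0 D f(D)). *)
Definition M_gens (i0 : int) (S : {poly F} -> Prop) (x : Wel) : Prop :=
  [\/ x = homog i0 1, x = homog (i0 + 1) 1, x = homog i0 'X
    | exists2 f, S f & x = homog 0 f].

Definition M_sub (i0 : int) (S : {poly F} -> Prop) : Wel -> Prop :=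
  lie_gen (M_gens i0 S).

Definition is_subspace (S : {poly F} -> Prop) : Prop :=
  S 0 /\ forall (c : F) (f g : {poly F}), S f -> S g -> S (c *: f + g).

Definition finite_codim (S : {poly F} -> Prop) : Prop :=
  exists (n : nat) (v : 'I_n -> {poly F}),
    forall p : {poly F}, exists c : 'I_n -> F,
      S (p - \sum_(l < n) c l *: v l).
End WittType.

(* Main.v *)
Require Import Defs.
From HB Require Import structures.
From mathcomp Require Import all_boot all_order all_algebra.
From mathcomp Require Import ring zify.
From Stdlib Require Import FunctionalExtensionality.
Import Order.TTheory GRing.Theory Num.Theory.
Local Open Scope ring_scope.

Section Alg.
Variable F : fieldType.
Implicit Types p q P Q : {poly F}.

Lemma size_deriv_leq p : leq (size p^`()) (size p).-1.
Proof.
have [->|nz] := eqVneq p 0; first by rewrite deriv0 size_poly0.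
by have := lt_size_deriv nz; rewrite (polySpred nz).
Qed.

Lemma taylor1 (c : F) P :
  leq (size (P \Po ('X + c%:P) - P - c *: P^`())) (size P).-2.
Proof.
elim/poly_ind: P => [|Q a IH]; first by rewrite comp_poly0 deriv0 scaler0 !subr0 size_poly0.
set R := Q \Po ('X + c%:P) - Q - c *: Q^`() in IH.
have E : (Q * 'X + a%:P) \Po ('X + c%:P) - (Q * 'X + a%:P) - c *: (Q * 'X + a%:P)^`()
   = c%:P * c%:P * Q^`() + R * 'X + c%:P * R.
  rewrite comp_poly_MXaddC derivMXaddC /R -!mul_polyC.
  have -> : Q \Po ('X + c%:P) = (Q \Po ('X + c%:P) - Q - c%:P * Q^`()) + Q + c%:P * Q^`() by ring.
  ring.
rewrite E.
have h1 : leq (size Q).-1 (size (Q * 'X + a%:P)).-2.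
  have [->|nzQ] := eqVneq Q 0; first by rewrite size_poly0.
  by rewrite size_MXaddC (negbTE nzQ).
apply: leq_trans h1.
have hQ' := size_deriv_leq Q.
have hR : leq (size (R * 'X)) (size Q).-1.
  have [->|nzR] := eqVneq R 0; first by rewrite mul0r size_poly0.
  rewrite size_mulX //.
  have : size R != 0 by rewrite size_poly_eq0.
  move: IH; rewrite -/R; lia.
have hR2 : leq (size (c%:P * R)) (size Q).-1.
  rewrite mul_polyC; apply: leq_trans (size_scale_leq _ _) _; move: IH; rewrite -/R; lia.
have hQ2 : leq (size (c%:P * c%:P * Q^`())) (size Q).-1.
  rewrite -mulrA !mul_polyC; apply: leq_trans (size_scale_leq _ _) _.
  by apply: leq_trans (size_scale_leq _ _) _.
apply: leq_trans (size_polyD _ _) _; rewrite geq_max hR2 andbT.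
apply: leq_trans (size_polyD _ _) _; by rewrite geq_max hR hQ2.
Qed.

Lemma coefM_top p q (a b : nat) : leq (size p) a.+1 -> leq (size q) b.+1 ->
  (p * q)`_(a + b) = p`_a * q`_b.
Proof.
move=> hp hq; rewrite coefM.
have ha : (a < (a + b).+1)%N by rewrite ltnS leq_addr.
rewrite (bigD1 (Ordinal ha)) //= addKn big1 ?addr0 // => j /eqP hj.
have hj' : nat_of_ord j != a by apply/eqP => e; apply: hj; apply: val_inj.
case: (ltngtP j a) hj' => // hja _.
  have -> : q`_(a + b - j) = 0 by apply: (leq_sizeP _ _ hq); lia.
  by rewrite mulr0.
have -> : p`_j = 0 by apply: (leq_sizeP _ _ hp); lia.
by rewrite mul0r.
Qed.

Lemma size_mul_le p q (a b : nat) : leq (size p) a.+1 -> leq (size q) b.+1 ->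
  leq (size (p * q)) (a + b).+1.
Proof.
move=> hp hq; apply: leq_trans (size_polyMleq _ _) _.
have [->|nzp] := eqVneq p 0; first by rewrite size_poly0 add0n; lia.
have [->|nzq] := eqVneq q 0; first by rewrite size_poly0 addn0; lia.
have : size p != 0 by rewrite size_poly_eq0.
have : size q != 0 by rewrite size_poly_eq0.
lia.
Qed.

Lemma brc_lead (i j : int) (f g : {poly F}) (a b : nat) : leq (size f) a.+1 -> leq (size g) b.+1 ->
  leq (size (brc i j f g)) (a + b).+1 /\ (brc i j f g)`_(a + b) = f`_a * g`_b * ((a.+1)%:R * j%:~R - (b.+1)%:R * i%:~R).
Proof.
move=> hf hg.
set cj : F := j%:~R; set ci : F := i%:~R.
have hX : leq (size ('X : {poly F})) 2%N by rewrite size_polyX.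
set T1 := pshift j ('X * f) - 'X * f - cj *: ('X * f)^`().
set T2 := pshift i ('X * g) - 'X * g - ci *: ('X * g)^`().
have hT1 : leq (size T1) a.
  apply: leq_trans (taylor1 _ _) _.
  have := size_mul_le _ _ _ _ hX hf; rewrite /= add1n; lia.
have hT2 : leq (size T2) b.
  apply: leq_trans (taylor1 _ _) _.
  have := size_mul_le _ _ _ _ hX hg; rewrite /= add1n; lia.
have hDf : leq (size ('X * f)^`()) a.+1.
  apply: leq_trans (size_deriv_leq _) _.
  have := size_mul_le _ _ _ _ hX hf; rewrite /= add1n; lia.
have hDg : leq (size ('X * g)^`()) b.+1.
  apply: leq_trans (size_deriv_leq _) _.
  have := size_mul_le _ _ _ _ hX hg; rewrite /= add1n; lia.
have E : brc i j f g = cj%:P * (('X * f)^`() * g) - ci%:P * (('X * g)^`() * f)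
    + T1 * g - T2 * f.
  rewrite /brc /T1 /T2 -!mul_polyC.
  move: (pshift j ('X * f)) (pshift i ('X * g)) (('X * f)^`()) (('X * g)^`()) => A B C D.
  ring.
rewrite E; split.
  have b1 : leq (size (cj%:P * (('X * f)^`() * g))) (a+b).+1.
    by rewrite mul_polyC (leq_trans (size_scale_leq _ _)) // size_mul_le.
  have b2 : leq (size (ci%:P * (('X * g)^`() * f))) (a+b).+1.
    by rewrite mul_polyC (leq_trans (size_scale_leq _ _)) // addnC size_mul_le.
  have b3 : leq (size (T1 * g)) (a+b).+1.
    by rewrite size_mul_le // (leq_trans hT1).
  have b4 : leq (size (T2 * f)) (a+b).+1.
    by rewrite addnC size_mul_le // (leq_trans hT2).
  apply: leq_trans (size_polyD _ _) _; rewrite geq_max size_polyN b4 andbT.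
  apply: leq_trans (size_polyD _ _) _; rewrite geq_max b3 andbT.
  apply: leq_trans (size_polyD _ _) _; by rewrite geq_max size_polyN b1 b2.
have c1 : (('X * f)^`() * g)`_(a+b) = ('X*f)^`()`_a * g`_b := coefM_top _ _ _ _ hDf hg.
have c2 : (('X * g)^`() * f)`_(a+b) = ('X*g)^`()`_b * f`_a.
  by rewrite addnC; exact: coefM_top _ _ _ _ hDg hf.
have c3 : (T1 * g)`_(a+b) = T1`_a * g`_b := coefM_top _ _ _ _ (leq_trans hT1 (leqnSn _)) hg.
have c4 : (T2 * f)`_(a+b) = T2`_b * f`_a.
  by rewrite addnC; exact: coefM_top _ _ _ _ (leq_trans hT2 (leqnSn _)) hf.
rewrite !coefD !coefN !coefCM c1 c2 c3 c4.
have d1 : ('X * f)^`()`_a = f`_a *+ a.+1 by rewrite coef_deriv coefXM.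
have d2 : ('X * g)^`()`_b = g`_b *+ b.+1 by rewrite coef_deriv coefXM.
have -> : T1`_a = 0 by apply: (leq_sizeP _ _ hT1).
have -> : T2`_b = 0 by apply: (leq_sizeP _ _ hT2).
rewrite d1 d2 !mul0r subr0 addr0.
move: (f`_a) (g`_b) => u v.
rewrite /cj /ci; move: (j%:~R : F) (i%:~R : F) => x y.
ring.
Qed.
Lemma brc0l i j (g : {poly F}) : brc i j 0 g = 0.
Proof. by rewrite /brc /pshift mulr0 comp_poly0 mul0r mulr0 subr0. Qed.

Lemma brc0r i j (f : {poly F}) : brc i j f 0 = 0.
Proof. by rewrite /brc /pshift !mulr0 comp_poly0 mul0r subr0. Qed.

Lemma suppN_homog (N : nat) (i : int) (f : {poly F}) : (`|i| <= N)%N -> suppN N (homog i f).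
Proof.
move=> hi l hl; rewrite /homog; case: eqP => // e; subst l; lia.
Qed.

Lemma Wbr_homog (N : nat) (i j : int) (f g : {poly F}) : (`|i| <= N)%N -> (`|j| <= N)%N ->
  Wbr N (homog i f) (homog j g) = homog (i + j) (brc i j f g).
Proof.
move=> hi hj; apply: functional_extensionality => k; rewrite /Wbr /homog.
pose n := absz (i + N%:Z).
have hn : n%:Z = i + N%:Z by rewrite /n; lia.
have hlt : (n < (N + N).+1)%N by rewrite /n; lia.
rewrite (bigD1 (Ordinal hlt)) //= big1 ?addr0; last first.
  move=> a ha; have -> : (a%:Z - N%:Z == i) = false.
    apply/negbTE/eqP => e; move/eqP: ha; apply; apply: val_inj => /=; lia.
  by rewrite brc0l.
have -> : (n%:Z - N%:Z == i) = true by apply/eqP; lia.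
have -> : (n%:Z - N%:Z) = i by lia.
case: (eqVneq k (i + j)) => [->|hk].
  by rewrite addrAC subrr add0r eqxx.
have -> : (k - i == j) = false by apply/negbTE/eqP => e; move/eqP: hk; apply; lia.
by rewrite brc0r.
Qed.
End Alg.

Section Lie.
Variable F : fieldType.
Variable S : {poly F} -> Prop.
Variable i0 : int.

Definition Vk (k : int) (g : {poly F}) := M_sub i0 S (homog k g).

Lemma homog0 k : homog k (0 : {poly F}) = W0 F.
Proof. by apply: functional_extensionality => l; rewrite /homog /W0; case: eqP. Qed.

Lemma Vk0 k : Vk k 0.
Proof. by rewrite /Vk homog0; apply: lg_0. Qed.

Lemma Vk_lin k c f g : Vk k f -> Vk k g -> Vk k (c *: f + g).
Proof.
move=> hf hg; rewrite /Vk in hf hg *.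
have -> : homog k (c *: f + g) = Wadd (Wscale c (homog k f)) (homog k g).
  apply: functional_extensionality => l; rewrite /homog /Wadd /Wscale.
  by case: eqP => _ //; rewrite scaler0 addr0.
by apply: lg_add => //; apply: lg_scale.
Qed.

Lemma Vk_br i j f g : Vk i f -> Vk j g -> Vk (i + j) (brc i j f g).
Proof.
move=> hf hg; rewrite /Vk -(@Wbr_homog _ (maxn `|i| `|j|)) ?(leq_maxl, leq_maxr) //.
apply: lg_br => //; apply: suppN_homog; [exact: leq_maxl | exact: leq_maxr].
Qed.

Definition good (k : int) (d : nat) := exists p, Vk k p /\ size p = d.+1.

Lemma intr_char0 (hchar : [pchar F] =i pred0) (z : int) : z != 0 -> (z%:~R : F) != 0.
Proof.
move/pcharf0P: hchar => h.
case: z => n hn.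
  by rewrite -pmulrn h; apply: contra hn => /eqP ->.
by rewrite NegzE mulrNz oppr_eq0 -pmulrn h.
Qed.

Lemma good_br (hchar : [pchar F] =i pred0) i j f g (a b : nat) :
  Vk i f -> size f = a.+1 -> Vk j g -> size g = b.+1 ->
  ((a.+1)%:Z * j - (b.+1)%:Z * i != 0) -> good (i + j) (a + b).
Proof.
move=> hf sf hg sg hne.
have [h1 h2] := @brc_lead F i j f g a b (eq_leq sf) (eq_leq sg).
exists (brc i j f g); split; first exact: Vk_br.
have hfa : f`_a != 0.
  have : lead_coef f != 0 by rewrite lead_coef_eq0 -size_poly_eq0 sf.
  by rewrite lead_coefE sf.
have hgb : g`_b != 0.
  have : lead_coef g != 0 by rewrite lead_coef_eq0 -size_poly_eq0 sg.
  by rewrite lead_coefE sg.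
have hc : (brc i j f g)`_(a + b) != 0.
  rewrite h2 !mulf_neq0 //.
  have := @intr_char0 hchar _ hne.
  by rewrite intrB !intrM -!pmulrn.
apply/eqP; rewrite eqn_leq h1 /=; apply: contraR hc; rewrite -ltnNge ltnS => hs.
by apply/eqP; apply: (leq_sizeP _ _ hs).
Qed.
Lemma Vk_e1 : Vk i0 1.
Proof. by rewrite /Vk; apply: lg_in; apply: Or41. Qed.
Lemma Vk_e2 : Vk (i0 + 1) 1.
Proof. by rewrite /Vk; apply: lg_in; apply: Or42. Qed.
Lemma Vk_e3 : Vk i0 'X.
Proof. by rewrite /Vk; apply: lg_in; apply: Or43. Qed.
Lemma Vk_S f : S f -> Vk 0 f.
Proof. by move=> hf; rewrite /Vk; apply: lg_in; apply: Or44; exists f. Qed.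

Hypothesis hchar : [pchar F] =i pred0.

Lemma good_e1 k b : good k b -> k != (b.+1)%:Z * i0 -> good (i0 + k) b.
Proof.
case=> g [hg sg] hk.
have := @good_br hchar i0 k 1 g 0 b Vk_e1 (size_poly1 _) hg sg.
by rewrite add0n mul1r subr_eq0; apply.
Qed.

Lemma good_e2 k b : good k b -> k != (b.+1)%:Z * (i0 + 1) -> good (i0 + 1 + k) b.
Proof.
case=> g [hg sg] hk.
have := @good_br hchar (i0 + 1) k 1 g 0 b Vk_e2 (size_poly1 _) hg sg.
by rewrite add0n mul1r subr_eq0; apply.
Qed.

Lemma good_e3 k b : good k b -> 2%:Z * k != (b.+1)%:Z * i0 -> good (i0 + k) b.+1.
Proof.
case=> g [hg sg] hk.
have := @good_br hchar i0 k 'X g 1 b Vk_e3 (size_polyX F) hg sg.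
by rewrite add1n subr_eq0; apply.
Qed.

Lemma good_S f a k b : S f -> size f = a.+1 -> good k b -> k != 0 -> good k (a + b).
Proof.
move=> hS sf [g [hg sg]] hk.
have := @good_br hchar 0 k f g a b (@Vk_S f hS) sf hg sg.
rewrite add0r mulr0 subr0; apply; rewrite mulf_neq0 //.
Qed.

Lemma lower_size (p : {poly F}) n : leq (size p) n.+1 -> p`_n = 0 -> leq (size p) n.
Proof.
move=> h1 h2; apply/leq_sizeP => j hj.
case: (eqVneq j n) => [->//|hne]; apply: (leq_sizeP _ _ h1); lia.
Qed.

Lemma tri k : (forall d, good k d) -> forall p, Vk k p.
Proof.
move=> hg p; move: {2}(size p) (leqnn (size p)) => n; elim: n p => [|n IH] q hq.
  by move: hq; rewrite size_poly_leq0 => /eqP ->; apply: Vk0.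
case: (leqP (size q) n) => hqn; first exact: IH.
have sq : size q = n.+1 by apply/eqP; rewrite eqn_leq hq.
have [r [hr sr]] := hg n.
set c := lead_coef q / lead_coef r.
have -> : q = c *: r + (q - c *: r) by rewrite addrC subrK.
apply: Vk_lin => //; apply: IH; apply: lower_size.
  apply: leq_trans (size_polyD _ _) _; rewrite geq_max size_polyN sq leqnn.
  by rewrite (leq_trans (size_scale_leq _ _)) // sr.
have hr0 : lead_coef r != 0 by rewrite lead_coef_eq0 -size_poly_eq0 sr.
rewrite coefB coefZ /c !lead_coefE sq sr /= divfK ?subrr //.
by move: hr0; rewrite lead_coefE sr.
Qed.
Variable m : nat.
Hypothesis hm : i0 = m%:Z.
Hypothesis hm0 : (0 < m)%N.

Lemma deg0y y : good (2 * m + 1 + y * (m + 1))%N%:Z 0.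
Proof.
elim: y => [|y IH].
  have h := @good_e2 i0 0 (ex_intro _ 1 (conj Vk_e1 (size_poly1 _))).
  have -> : (2 * m + 1 + 0 * (m + 1))%N%:Z = i0 + 1 + i0 by rewrite hm; lia.
  by apply: h; rewrite hm; apply/eqP; lia.
have h := @good_e2 _ _ IH.
have -> : (2 * m + 1 + y.+1 * (m + 1))%N%:Z = i0 + 1 + (2 * m + 1 + y * (m + 1))%N%:Z.
  by rewrite hm; nia.
by apply: h; rewrite hm; apply/eqP; nia.
Qed.

Lemma deg0xy x y : good (2 * m + 1 + x * m + y * (m + 1))%N%:Z 0.
Proof.
elim: x => [|x IH]; first by rewrite mul0n addn0; apply: deg0y.
have h := @good_e1 _ _ IH.
have -> : (2 * m + 1 + x.+1 * m + y * (m + 1))%N%:Z = i0 + (2 * m + 1 + x * m + y * (m + 1))%N%:Z.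
  by rewrite hm; nia.
by apply: h; rewrite hm; apply/eqP; nia.
Qed.

Lemma deg0_all n : (2 * m + 1 + m * m <= n)%N -> good n%:Z 0.
Proof.
move=> hn.
set n' := (n - (2 * m + 1))%N.
have e := div.divn_eq n' m.
have hr := ltn_pmod n' hm0.
have hq : (m <= n' %/ m)%N by rewrite leq_divRL //; rewrite /n'; lia.
have := deg0xy (n' %/ m - n' %% m)%N (n' %% m)%N.
have -> : (2 * m + 1 + (n' %/ m - n' %% m) * m + n' %% m * (m + 1))%N = n.
  move: e hr hq; rewrite /n'; move: (n' %/ m)%N (n' %% m)%N => q r; nia.
done.
Qed.

Lemma degd d n : (2 * m + 1 + m * m + d * m <= n)%N -> good n%:Z d.
Proof.
elim: d n => [|d IH] n hn; first by apply: deg0_all; lia.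
have hg : good (n - m)%N%:Z d by apply: IH; nia.
have h := @good_e3 _ _ hg.
have -> : n%:Z = i0 + (n - m)%N%:Z by rewrite hm; nia.
by apply: h; rewrite hm; apply/eqP; nia.
Qed.
End Lie.

Lemma codim_degs (F : fieldType) (S : {poly F} -> Prop) : finite_codim S ->
  exists D0 : nat, forall a, (D0 <= a)%N -> exists f, S f /\ size f = a.+1.
Proof.
case=> n [v hv]; exists (\max_(l < n) size (v l))%N => a ha.
have [c hc] := hv 'X^a.
exists ('X^a - \sum_(l < n) c l *: v l); split => //.
have hs : leq (size (\sum_(l < n) c l *: v l)) a.
  apply: leq_trans (size_sum _ _ _) _; apply: leq_trans ha.
  apply/bigmax_leqP => l _; apply: leq_trans (size_scale_leq _ _) _; exact: leq_bigmax.
by rewrite size_polyDl ?size_polyXn // size_polyN ?size_polyXn ltnS.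
Qed.

Theorem lemma2p1 (F : closedFieldType) (hchar : [pchar F] =i pred0)
  (S : {poly F} -> Prop) (hS : is_subspace S) (hcod : finite_codim S)
  (i0 : int) (hi0 : 0 < i0) :
  exists K : int, 0 < K /\
    forall x : Wel F, finsupp x -> (forall i : int, i < K -> x i = 0) ->
      M_sub i0 S x.
Proof.
have [m hm] : exists m : nat, i0 = m%:Z by exists (absz i0); lia.
have hm0 : (0 < m)%N by lia.
have [D0 hD0] := @codim_degs F S hcod.
pose K := (2 * m + 1 + m * m + D0 * m)%N.
exists K%:Z; split; first by rewrite /K; lia.
have allV : forall k : int, K%:Z <= k -> forall p, @Vk F S i0 k p.
  move=> k hk; apply: (@tri F S i0 k) => d.
  have ek : k = (absz k)%:Z by lia.
  rewrite ek; case: (leqP d D0) => hd.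
    apply: (@degd F S i0 hchar m hm hm0 d); rewrite /K in hk; nia.
  have [f [hf sf]] := hD0 d (ltnW hd).
  have h0 : @good F S i0 (absz k)%:Z 0.
    apply: (@degd F S i0 hchar m hm hm0 0); rewrite /K in hk; nia.
  have := @good_S F S i0 hchar f d _ 0 hf sf h0.
  rewrite addn0; apply; rewrite /K in hk; apply/eqP; lia.
move=> x [N hN] hx0.
pose y (n : nat) : Wel F := fun k => if k < n%:Z then x k else 0.
have hy : forall n, M_sub i0 S (y n).
  elim => [|n IH].
    have -> : y 0%N = W0 F.
      apply: functional_extensionality => k; rewrite /y /W0.
      case: ifP => // hk; apply: hx0; lia.
    exact: lg_0.
  have -> : y n.+1 = Wadd (y n) (homog n%:Z (x n%:Z)).
    apply: functional_extensionality => k; rewrite /y /Wadd /homog.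
    case: (eqVneq k n%:Z) => [->|hne].
      have -> : (n%:Z < n.+1%:Z) = true by lia.
      have -> : (n%:Z < n%:Z) = false by lia.
      by rewrite add0r.
    have -> : (k < n.+1%:Z) = (k < n%:Z) by apply/idP/idP; lia.
    by rewrite addr0.
  apply: lg_add => //.
  case: (leP K n) => hKn; first by apply: allV; lia.
  rewrite hx0; last by lia.
  by rewrite homog0; apply: lg_0.
have -> : x = y N.+1.
  apply: functional_extensionality => k; rewrite /y; case: ifP => // hk.
  apply: hN; lia.
exact: hy.
Qed.
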